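(* Let $\mathbb{F}$ be an algebraically closed field of characteristic $0$, $D$ a finite-dimensional $\mathbb{F}$-vector space with $\dim D\geq2$, and $\Gamma$ an additive subgroup of $D^{\ast}$ with $\bigcap_{\alpha\in\Gamma}\ker\alpha=\{0\}$. Let $\mu,\eta\in D^{\ast}$ and $\zeta\in\Gamma$. Then: (i) $\mathscr{M}_\mu$ is irreducible if $\mu\notin\Gamma$; if $\mu\in\Gamma$, then $\mathscr{M}_\mu=\big(\bigoplus_{\alpha\in\Gamma\setminus\{-\mu\}}\mathbb{F}v_\alpha\big)\oplus\mathbb{F}v_{-\mu}$ is a direct sum of two irreducible submodules. (ii) If $\eta\neq0$, then $\mathscr{A}_{\zeta,\eta}$ and $\mathscr{B}_{\zeta,\eta}$ are indecomposable but reducible; $\mathscr{A}_{\zeta,\eta}$ has the irreducible submodule $\bigoplus_{\alpha\in\Gamma\setminus\{-\zeta\}}\mathbb{F}v_\alpha$, while $\mathscr{B}_{\zeta,\eta}$ has the one-dimensional trivial submodule $\mathbb{F}v_{-\zeta}$ and the quotient $\mathscr{B}_{\zeta,\eta}/\mathbb{F}v_{-\zeta}$ is irreducible. If $\eta=0$, then $\mathscr{A}_{\zeta,0}\simeq\mathscr{B}_{\zeta,0}\simeq\mathscr{M}_0$.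
   Context: $\mathbb{F}[\Gamma]$ has basis $\{x^\alpha\mid\alpha\in\Gamma\}$ with $x^\alpha x^\beta=x^{\alpha+\beta}$; $\mathcal{W}(\Gamma,D)=\mathbb{F}[\Gamma]\otimes D$ (elements $x^\alpha\partial$) has bracket $[x^\alpha\partial_1,x^\beta\partial_2]=x^{\alpha+\beta}(\beta(\partial_1)\partial_2-\alpha(\partial_2)\partial_1)$. $\mathcal{S}(\Gamma,D)$ is the subalgebra spanned by $x^\alpha\partial$ with $\alpha\in\Gamma\setminus\{0\}$, $\partial\in\ker\alpha$, graded by $\Gamma$. The modules below are $\mathcal{S}(\Gamma,D)$-modules with basis $\{v_\beta\mid\beta\in\Gamma\}$, where $\alpha\in\Gamma\setminus\{0\}$, $\partial\in\ker\alpha$: $\mathscr{M}_\mu$: $x^\alpha\partial.v_\beta=(\beta+\mu)(\partial)v_{\alpha+\beta}$ for all $\beta$. $\mathscr{A}_{\zeta,\eta}$: $x^\alpha\partial.v_\beta=(\beta+\zeta)(\partial)v_{\alpha+\beta}$ for $\beta\neq-\zeta$, and $x^\alpha\partial.v_{-\zeta}=\eta(\partial)v_{\alpha-\zeta}$. $\mathscr{B}_{\zeta,\eta}$: $x^\alpha\partial.v_\beta=(\beta+\zeta)(\partial)v_{\alpha+\beta}$ for $\beta\neq-\alpha-\zeta$, and $x^\alpha\partial.v_{-\alpha-\zeta}=\eta(\partial)v_{-\zeta}$. *)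

(* Defs.v *)
From HB Require Import structures.
From mathcomp Require Import all_boot all_order all_algebra.
Set Implicit Arguments. Unset Strict Implicit. Unset Printing Implicit Defensive.
Import Order.TTheory GRing.Theory Num.Theory.
Local Open Scope ring_scope.

(* A module with basis
   {v_b | b in G} is modelled by its coefficient functions: an element is a
   function f : D^* -> F, supported in G and with finite support
   (f = \sum_b f b * v_b).  All modules considered here are "weighted shift"
   modules: x^a d . v_b = c a d b * v_(a+b), for a coefficient function c. *)

Section ShiftModules.
Variables (F : fieldType) (D : vectType F).
Local Notation Dstar := 'Hom(D, F^o).
Implicit Types (G : pred Dstar) (c : Dstar -> D -> Dstar -> F) (f : Dstar -> F).

Definition Vmod G f : Prop :=
  (forall g, g \notin G -> f g = 0) /\
  exists s : seq Dstar, forall g, f g != 0 -> g \in s.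

Definition act c (a : Dstar) (d : D) f : Dstar -> F :=
  fun g => c a d (g - a) * f (g - a).

Definition zerof f : Prop := forall g, f g = 0.

(* W is an S(G,D)-submodule: a subspace of Vmod G stable under all
   spanning elements x^a d with a in G \ {0}, d in ker a *)
Definition submodule G c (W : (Dstar -> F) -> Prop) : Prop :=
  [/\ (forall f, W f -> Vmod G f),
      W (fun _ => 0),
      (forall f h, W f -> W h -> W (fun g => f g + h g)),
      (forall (k : F) f, W f -> W (fun g => k * f g)) &
      (forall a d f, a \in G -> a != 0 -> a d = 0 -> W f -> W (act c a d f))].

Definition irreducible_sub G c (W : (Dstar -> F) -> Prop) : Prop :=
  [/\ submodule G c W,
      (exists f, W f /\ ~ zerof f) &
      (forall U, submodule G c U -> (forall f, U f -> W f) ->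
         (forall f, U f -> zerof f) \/ (forall f, W f -> U f))].

Definition irreducible_mod G c : Prop := irreducible_sub G c (Vmod G).

Definition direct_sum G (W1 W2 : (Dstar -> F) -> Prop) : Prop :=
  (forall f, W1 f -> W2 f -> zerof f) /\
  (forall f, Vmod G f -> exists f1 f2,
       [/\ W1 f1, W2 f2 & forall g, f g = f1 g + f2 g]).

Definition indecomposable G c : Prop :=
  (exists f, Vmod G f /\ ~ zerof f) /\
  ~ (exists W1 W2,
        submodule G c W1 /\ submodule G c W2 /\
        (exists f, W1 f /\ ~ zerof f) /\ (exists f, W2 f /\ ~ zerof f) /\
        direct_sum G W1 W2).

Definition quotient_irreducible G c (U : (Dstar -> F) -> Prop) : Prop :=
  [/\ submodule G c U,
      (exists f, Vmod G f /\ ~ U f) &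
      (forall W, submodule G c W -> (forall f, U f -> W f) ->
         (forall f, W f -> U f) \/ (forall f, Vmod G f -> W f))].

Definition mod_iso G c1 c2 : Prop :=
  exists phi : (Dstar -> F) -> (Dstar -> F),
  (forall f, Vmod G f -> Vmod G (phi f)) /\
  [/\ (forall f h, Vmod G f -> Vmod G h -> f =1 h -> phi f =1 phi h),
      (forall (k : F) f h, Vmod G f -> Vmod G h ->
          phi (fun g => k * f g + h g) =1 (fun g => k * phi f g + phi h g)),
      (forall f h, Vmod G f -> Vmod G h -> phi f =1 phi h -> f =1 h),
      (forall h, Vmod G h -> exists2 f, Vmod G f & phi f =1 h) &
      (forall a d f, a \in G -> a != 0 -> a d = 0 -> Vmod G f ->
          phi (act c1 a d f) =1 act c2 a d (phi f))].

Definition line (b : Dstar) f : Prop :=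
  exists k : F, forall g, f g = if g == b then k else 0.

Definition avoid G (b : Dstar) f : Prop := Vmod G f /\ f b = 0.

Definition cM (mu : Dstar) : Dstar -> D -> Dstar -> F :=
  fun a d b => (b + mu) d.
Definition cA (zeta eta : Dstar) : Dstar -> D -> Dstar -> F :=
  fun a d b => if b == - zeta then eta d else (b + zeta) d.
Definition cB (zeta eta : Dstar) : Dstar -> D -> Dstar -> F :=
  fun a d b => if b == - a - zeta then eta d else (b + zeta) d.

End ShiftModules.

(* Main.v *)
Require Import Defs.
From HB Require Import structures.
From mathcomp Require Import all_boot all_order all_algebra.
From mathcomp Require Import ring zify.
From Stdlib Require Import Classical FunctionalExtensionality.
Import GRing.Theory.
Set Implicit Arguments. Unset Strict Implicit. Unset Printing Implicit Defensive.
Local Open Scope ring_scope.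

Section Geo.
Variables (F : fieldType) (D : vectType F).
Local Notation Dstar := 'Hom(D, F^o).
Variable (G : pred Dstar).
Hypothesis (G0 : 0 \in G) (GB : forall a b, a \in G -> b \in G -> a - b \in G).
Hypothesis (Gsep : forall d : D, (forall a, a \in G -> a d = 0) -> d = 0).
Hypothesis (Hdim : (2 <= \dim (fullv : {vspace D}))%N).

Local Notation lfE := (add_lfunE, opp_lfunE, zero_lfunE).

Lemma GN a : a \in G -> - a \in G.
Proof. by move=> Ha; rewrite -sub0r; apply: GB. Qed.

Lemma GD a b : a \in G -> b \in G -> a + b \in G.
Proof. by move=> Ha Hb; rewrite -[b]opprK; apply: GB => //; apply: GN. Qed.

Lemma nzP (phi : Dstar) : phi != 0 <-> exists d, phi d != 0.
Proof.
split.
  by move/lfunPn=> [u Hu]; exists u; rewrite zero_lfunE in Hu.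
move=> [d Hd]; apply/negP=> /eqP E; move: Hd; by rewrite E zero_lfunE eqxx.
Qed.

Lemma eq0P (phi : Dstar) : (forall d, phi d = 0) -> phi = 0.
Proof. by move=> H; apply/lfunP=> d; rewrite H zero_lfunE. Qed.

Lemma ker_nz (phi : Dstar) : exists d : D, d != 0 /\ phi d = 0.
Proof.
have E := limg_ker_dim phi fullv.
have H1 : (\dim (phi @: fullv) <= 1)%N.
  have -> : 1%N = \dim (fullv : {vspace F^o}) by rewrite dimvf.
  by apply: dimvS; apply: subvf.
have H2 : (0 < \dim (fullv :&: lker phi))%N.
  move: Hdim; rewrite -E; move: H1; lia.
exists (vpick (fullv :&: lker phi)); split.
  by rewrite vpick0 -dimv_eq0 -lt0n.
have := memv_pick (fullv :&: lker phi); rewrite memv_cap => /andP[_].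
by rewrite memv_ker => /eqP.
Qed.

Lemma scaleoE (x y : F) : x *: (y : F^o) = x * y.
Proof. by []. Qed.

Lemma prop_of_ker (a phi : Dstar) : a != 0 -> (forall d, a d = 0 -> phi d = 0) ->
  exists k : F, forall d, phi d = k * a d.
Proof.
move=> /nzP [d0 Hd0] H; exists (phi d0 / a d0) => d.
have He : a (d - (a d / a d0) *: d0) = 0.
  rewrite linearB linearZ /= scaleoE. by field.
have := H _ He; rewrite linearB linearZ /= scaleoE => /eqP.
rewrite subr_eq0 => /eqP ->. by field.
Qed.


Lemma exists_a1 : exists a1, a1 \in G /\ a1 != 0.
Proof.
apply: NNPP => H. have [d [Hd _]] := ker_nz 0.
move/eqP: Hd; apply; apply: Gsep => a Ha.
case: (eqVneq a 0) => [->|Ha0]; first by rewrite zero_lfunE.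
by exfalso; apply: H; exists a.
Qed.

Lemma exists_a2 (a1 : Dstar) : exists a2, a2 \in G /\ ~ (exists k : F, forall d, a2 d = k * a1 d).
Proof.
apply: NNPP => H. have [d [Hd Ha1]] := ker_nz a1.
move/eqP: Hd; apply; apply: Gsep => a Ha.
have : exists k : F, forall d, a d = k * a1 d.
  by apply: NNPP => H'; apply: H; exists a.
by move=> [k ->]; rewrite Ha1 mulr0.
Qed.

Lemma indep (a1 a2 : Dstar) : a1 != 0 -> ~ (exists k : F, forall d, a2 d = k * a1 d) ->
  forall x y : F, (forall d, x * a1 d + y * a2 d = 0) -> x = 0 /\ y = 0.
Proof.
move=> /nzP [d0 H0] Hn x y Hxy.
case: (eqVneq y 0) => [Ey|Ey].
  split=> //. have := Hxy d0; rewrite Ey mul0r addr0 => /eqP.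
  by rewrite mulf_eq0 (negbTE H0) orbF => /eqP.
exfalso; apply Hn; exists (- x / y) => d.
have E' : y * a2 d = - (x * a1 d).
  by apply/eqP; rewrite -subr_eq0 opprK addrC Hxy.
apply: (mulfI Ey). rewrite E'. by field.
Qed.

Lemma nz_coef (phi x : Dstar) (k : F) : phi != 0 -> (forall d, phi d = k * x d) -> k != 0.
Proof.
move=> Hp E; apply/negP => /eqP Ek; move/negP: Hp; apply; apply/eqP; apply: eq0P => d.
by rewrite E Ek mul0r.
Qed.

Lemma stepA (a phi1 phi2 : Dstar) : a != 0 ->
  ~ (exists d, [/\ a d = 0, phi1 d != 0 & phi2 d != 0]) ->
  (exists k : F, forall d, phi1 d = k * a d) \/ (exists k : F, forall d, phi2 d = k * a d).
Proof.
move=> Ha Hn.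
case: (classic (forall d, a d = 0 -> phi1 d = 0)) => [H1|H1].
  by left; apply: prop_of_ker.
case: (classic (forall d, a d = 0 -> phi2 d = 0)) => [H2|H2].
  by right; apply: prop_of_ker.
exfalso.
have [d1 H1'] := not_all_ex_not _ _ H1; have [Ha1 Hp1] := imply_to_and _ _ H1'; move/eqP: Hp1 => Hp1.
have [d2 H2'] := not_all_ex_not _ _ H2; have [Ha2 Hp2] := imply_to_and _ _ H2'; move/eqP: Hp2 => Hp2.
apply: Hn.
case: (eqVneq (phi2 d1) 0) => E1; last by exists d1.
case: (eqVneq (phi1 d2) 0) => E2; last by exists d2.
exists (d1 + d2); rewrite !linearD /= Ha1 Ha2 E1 E2 addr0 add0r; by rewrite addr0.
Qed.

Lemma GEO (phi1 phi2 : Dstar) : phi1 != 0 -> phi2 != 0 ->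
  exists a, [/\ a \in G, a != 0 & exists d, [/\ a d = 0, phi1 d != 0 & phi2 d != 0]].
Proof.
move=> N1 N2; apply: NNPP => H.
have [a1 [G1 Z1]] := exists_a1.
have [a2 [G2 Z2]] := exists_a2 a1.
have Ind := indep Z1 Z2.
have Z2' : a2 != 0.
  apply/negP => /eqP E; apply: Z2; exists 0 => d; by rewrite E zero_lfunE mul0r.
have Z3 : a1 + a2 != 0.
  apply/negP => /eqP E; apply: Z2; exists (-1) => d.
  have := congr1 (fun f : Dstar => f d) E; rewrite add_lfunE zero_lfunE /= => e.
  apply/eqP; rewrite -subr_eq0; apply/eqP; rewrite -e; ring.
have nP : forall x, x \in G -> x != 0 ->
   (exists k : F, forall d, phi1 d = k * x d) \/ (exists k : F, forall d, phi2 d = k * x d).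
  move=> x Gx Zx; apply: stepA => // HP; apply: H; by exists x.
case: (nP _ G1 Z1) => [[k1 E1]|[k1 E1]]; case: (nP _ G2 Z2') => [[k2 E2]|[k2 E2]].
- have [] := Ind k1 (- k2).
    move=> d; have e1 := E1 d; have e2 := E2 d.
    have -> : k1 * a1 d + - k2 * a2 d = k1 * a1 d - k2 * a2 d by ring.
    by rewrite -e1 -e2 subrr.
  by move=> Ek; move: (nz_coef N1 E1); rewrite Ek eqxx.
- case: (nP _ (GD G1 G2) Z3) => [[k3 E3]|[k3 E3]].
  + have [] := Ind (k1 - k3) (- k3).
      move=> d; have e1 := E1 d; have e3 := E3 d; rewrite add_lfunE in e3.
      have -> : (k1 - k3) * a1 d + - k3 * a2 d = k1 * a1 d - k3 * (a1 d + a2 d) by ring.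
      by rewrite -e1 -e3 subrr.
    by move=> _ Ek; move: (nz_coef N1 E3); rewrite -oppr0 -Ek opprK eqxx.
  + have [] := Ind (- k3) (k2 - k3).
      move=> d; have e2 := E2 d; have e3 := E3 d; rewrite add_lfunE in e3.
      have -> : - k3 * a1 d + (k2 - k3) * a2 d = k2 * a2 d - k3 * (a1 d + a2 d) by ring.
      by rewrite -e2 -e3 subrr.
    by move=> Ek _; move: (nz_coef N2 E3); rewrite -oppr0 -Ek opprK eqxx.
- case: (nP _ (GD G1 G2) Z3) => [[k3 E3]|[k3 E3]].
  + have [] := Ind (- k3) (k2 - k3).
      move=> d; have e2 := E2 d; have e3 := E3 d; rewrite add_lfunE in e3.
      have -> : - k3 * a1 d + (k2 - k3) * a2 d = k2 * a2 d - k3 * (a1 d + a2 d) by ring.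
      by rewrite -e2 -e3 subrr.
    by move=> Ek _; move: (nz_coef N1 E3); rewrite -oppr0 -Ek opprK eqxx.
  + have [] := Ind (k1 - k3) (- k3).
      move=> d; have e1 := E1 d; have e3 := E3 d; rewrite add_lfunE in e3.
      have -> : (k1 - k3) * a1 d + - k3 * a2 d = k1 * a1 d - k3 * (a1 d + a2 d) by ring.
      by rewrite -e1 -e3 subrr.
    by move=> _ Ek; move: (nz_coef N2 E3); rewrite -oppr0 -Ek opprK eqxx.
- have [] := Ind k1 (- k2).
    move=> d; have e1 := E1 d; have e2 := E2 d.
    have -> : k1 * a1 d + - k2 * a2 d = k1 * a1 d - k2 * a2 d by ring.
    by rewrite -e1 -e2 subrr.
  by move=> Ek; move: (nz_coef N2 E1); rewrite Ek eqxx.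
Qed.


Lemma lin1 (L R x y : F) : x = y -> L - R = x - y -> L = R.
Proof. by move=> e E; apply/eqP; rewrite -subr_eq0 E e subrr. Qed.

Lemma lin2 (L R x1 y1 x2 y2 : F) : x1 = y1 -> x2 = y2 ->
  L - R = (x1 - y1) - (x2 - y2) -> L = R.
Proof. by move=> e1 e2 E; apply/eqP; rewrite -subr_eq0 E e1 e2 !subrr. Qed.

Hypothesis Hchar : [pchar F] =i pred0.

Lemma two_nz (a : Dstar) : a != 0 -> a + a != 0.
Proof.
move/nzP=> [d Hd]; apply/nzP; exists d; rewrite add_lfunE.
have -> : a d + a d = 2%:R * a d by ring.
rewrite mulf_neq0 //. by rewrite ((pcharf0P F).1 Hchar 2).
Qed.

Section Core.
Variables (nu : Dstar) (c : Dstar -> D -> Dstar -> F) (W : (Dstar -> F) -> Prop).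
Hypothesis Wadd : forall f h, W f -> W h -> W (fun g => f g + h g).
Hypothesis Wscale : forall (k : F) f, W f -> W (fun g => k * f g).
Hypothesis Wact : forall a d f, a \in G -> a != 0 -> a d = 0 -> W f -> W (act c a d f).
Hypothesis WG : forall f g, W f -> g \notin G -> f g = 0.
Hypothesis Wfin : forall f, W f -> exists s : seq Dstar, forall g, f g != 0 -> g \in s.
Hypothesis Hc : forall a d b, a \in G -> a != 0 -> a d = 0 -> b != - nu -> a + b != - nu ->
  c a d b = (b + nu) d.
Hypothesis H2 : forall f a d, W f -> a \in G -> a != 0 -> a d = 0 -> c a d (- nu) * f (- nu) = 0.

Lemma zero_of (g a : Dstar) d : g + a = - nu -> a d = 0 -> (g + nu) d = 0.
Proof.
move=> E ad; have := congr1 (fun f : Dstar => f d) E; rewrite /= !lfE ad => e.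
rewrite ?lfE; apply: (lin1 e); ring.
Qed.

Lemma actE f a d g : W f -> a \in G -> a != 0 -> a d = 0 -> g != - nu ->
  act c a d f g = (g + nu) d * f (g - a).
Proof.
move=> Wf Ga Za ad Hg; rewrite /act.
case: (eqVneq (g - a) (- nu)) => E.
  rewrite E (H2 Wf Ga Za ad) (zero_of E) ?mul0r //.
  by rewrite opp_lfunE ad oppr0.
rewrite Hc //; last by rewrite addrC subrK.
rewrite !lfE ad; ring.
Qed.

Lemma oppG a d : a \in G -> a != 0 -> a d = 0 -> [/\ - a \in G, - a != 0 & (- a) d = 0].
Proof. by move=> Ga Za ad; rewrite GN // oppr_eq0 Za opp_lfunE ad oppr0. Qed.

Lemma T2E f a d g : W f -> a \in G -> a != 0 -> a d = 0 -> g != - nu ->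
  act c (- a) d (act c a d f) g = ((g + nu) d) ^+ 2 * f g.
Proof.
move=> Wf Ga Za ad Hg; have [Ga' Za' ad'] := oppG Ga Za ad.
rewrite actE // ?opprK; last by apply: Wact.
case: (eqVneq (g + a) (- nu)) => E.
  rewrite (zero_of E ad); ring.
rewrite actE // addrK !lfE ad; ring.
Qed.

Lemma T3E f a d g : W f -> a \in G -> a != 0 -> a d = 0 -> g != - nu ->
  act c (- (a + a)) d (act c a d (act c a d f)) g = ((g + nu) d) ^+ 3 * f g.
Proof.
move=> Wf Ga Za ad Hg.
have Ga2 : a + a \in G by apply: GD.
have Za2 : a + a != 0 by apply: two_nz.
have ad2 : (a + a) d = 0 by rewrite add_lfunE ad addr0.
have [Ga' Za' ad'] := oppG Ga2 Za2 ad2.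
rewrite actE // ?opprK; last by apply: Wact => //; apply: Wact.
case: (eqVneq (g + (a + a)) (- nu)) => E.
  rewrite (zero_of E ad2); ring.
rewrite actE //; last by apply: Wact.
rewrite addrA addrK.
case: (eqVneq (g + a) (- nu)) => E'.
  rewrite (zero_of E' ad); ring.
rewrite actE // addrK !lfE ad; ring.
Qed.

Definition Kop a d (k : F) f : Dstar -> F := fun g =>
  act c (- (a + a)) d (act c a d (act c a d f)) g + (- k) * act c (- a) d (act c a d f) g.

Lemma WK a d k f : W f -> a \in G -> a != 0 -> a d = 0 -> W (Kop a d k f).
Proof.
move=> Wf Ga Za ad.
have Ga2 : a + a \in G by apply: GD.
have Za2 : a + a != 0 by apply: two_nz.
have ad2 : (a + a) d = 0 by rewrite add_lfunE ad addr0.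
have [Ga' Za' ad'] := oppG Ga2 Za2 ad2.
have [Ga1 Za1 ad1] := oppG Ga Za ad.
apply: Wadd; first by do 3! apply: Wact => //.
by apply: Wscale; do 2! apply: Wact => //.
Qed.

Lemma KE a d k f g : W f -> a \in G -> a != 0 -> a d = 0 -> g != - nu ->
  Kop a d k f g = ((g + nu) d) ^+ 2 * ((g + nu) d - k) * f g.
Proof.
move=> Wf Ga Za ad Hg; rewrite /Kop T3E // T2E //; ring.
Qed.

Lemma kill h b0 x : W h -> h b0 != 0 -> b0 != - nu -> x != - nu -> x != b0 ->
  exists h', [/\ W h', h' b0 != 0, h' x = 0 & forall g, g != - nu -> h g = 0 -> h' g = 0].
Proof.
move=> Wh hb Hb Hx Nx.
have N1 : b0 + nu != 0 by rewrite addr_eq0.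
have N2 : b0 - x != 0 by rewrite subr_eq0 eq_sym.
have [a [Ga Za [d [ad p1 p2]]]] := GEO N1 N2.
exists (Kop a d ((x + nu) d) h); split.
- exact: WK.
- rewrite KE //; rewrite !mulf_neq0 // ?expf_neq0 //.
  have -> : (b0 + nu) d - (x + nu) d = (b0 - x) d by rewrite !lfE; ring.
  done.
- by rewrite KE // subrr mulr0 mul0r.
- by move=> g Hg Hh; rewrite KE // Hh mulr0.
Qed.

Lemma reduce b0 (s : seq Dstar) h : W h -> h b0 != 0 -> b0 != - nu ->
  (forall g, g != - nu -> g != b0 -> h g != 0 -> g \in s) ->
  exists h', [/\ W h', h' b0 != 0 & forall g, g != - nu -> g != b0 -> h' g = 0].
Proof.
elim: s h => [|x s IH] h Wh hb Hb Hs.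
  exists h; split=> // g g1 g2.
  by case: (eqVneq (h g) 0) => // Hne; have := Hs g g1 g2 Hne.
case: (boolP ((x == b0) || (x == - nu))) => Hx.
  apply: (IH h) => // g g1 g2 Hne; have := Hs g g1 g2 Hne.
  rewrite in_cons => /orP [/eqP Eg|//]; exfalso.
  by move: Hx; rewrite -Eg (negbTE g1) (negbTE g2).
move: Hx; rewrite negb_or => /andP [x1 x2].
have [h' [W' hb' hx' Hz]] := kill Wh hb Hb x2 x1.
apply: (IH h') => // g g1 g2 Hne.
have Hne0 : h g != 0.
  by apply: contra Hne => /eqP e; apply/eqP; apply: Hz.
have := Hs g g1 g2 Hne0; rewrite in_cons => /orP [/eqP Eg|//].
by move: Hne; rewrite Eg hx' eqxx.
Qed.


Lemma step h b0 a d : W h -> h b0 != 0 -> (forall g, g != - nu -> g != b0 -> h g = 0) ->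
  a \in G -> a != 0 -> a d = 0 -> (b0 + nu) d != 0 ->
  [/\ W (act c a d h), act c a d h (b0 + a) != 0 &
      forall g, g != - nu -> g != b0 + a -> act c a d h g = 0].
Proof.
move=> Wh hb hz Ga Za ad bd.
have Hba : b0 + a != - nu.
  by apply/negP => /eqP E; move: bd; rewrite (zero_of E ad) eqxx.
split; first by apply: Wact.
  rewrite actE // addrK mulf_neq0 //.
  have -> : (b0 + a + nu) d = (b0 + nu) d by rewrite !lfE ad; ring.
  done.
move=> g g1 g2; rewrite actE //.
case: (eqVneq (g - a) (- nu)) => E.
  by rewrite (zero_of E) ?mul0r // opp_lfunE ad oppr0.
rewrite hz ?mulr0 //.
by apply: contra g2 => /eqP E'; apply/eqP; rewrite -E' subrK.
Qed.

Lemma reach h b0 b : W h -> h b0 != 0 -> (forall g, g != - nu -> g != b0 -> h g = 0) ->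
  b0 \in G -> b0 != - nu -> b \in G -> b != - nu ->
  exists h', [/\ W h', h' b != 0 & forall g, g != - nu -> g != b -> h' g = 0].
Proof.
move=> Wh hb hz Gb0 Nb0 Gb Nb.
case: (eqVneq b b0) => [->|Nbb]; first by exists h.
have Gu : b - b0 \in G by apply: GB.
have Zu : b - b0 != 0 by rewrite subr_eq0.
case: (classic (exists d, (b - b0) d = 0 /\ (b0 + nu) d != 0)) => [[d [ud bd]]|Hn].
  have [W1 N1 Z1] := step Wh hb hz Gu Zu ud bd.
  have Eb : b0 + (b - b0) = b by rewrite addrC subrK.
  by rewrite Eb in N1 Z1; exists (act c (b - b0) d h).
have Hker : forall d, (b - b0) d = 0 -> (b0 + nu) d = 0.
  move=> d ud; apply/eqP; apply/negPn/negP => bd.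
  by apply: Hn; exists d.
have [lam Hlam] := prop_of_ker Zu Hker.
have Nn : b0 + nu != 0 by rewrite addr_eq0.
have [a [Ga Za [d1 [ad1 p1 _]]]] := GEO Nn Nn.
have [W1 N1 Z1] := step Wh hb hz Ga Za ad1 p1.
have Gc : b0 + a \in G by apply: GD.
have Nc : b0 + a != - nu.
  by apply/negP => /eqP E; move: p1; rewrite (zero_of E ad1) eqxx.
have Gu2 : b - (b0 + a) \in G by apply: GB.
have Zu2 : b - (b0 + a) != 0.
  apply/negP => /eqP E; move/eqP: E; rewrite subr_eq0 => /eqP E.
  move: p1; rewrite Hlam E.
  have -> : (b0 + a - b0) d1 = 0 by rewrite !lfE ad1; ring.
  by rewrite mulr0 eqxx.
case: (classic (exists d, (b - (b0 + a)) d = 0 /\ (b0 + a + nu) d != 0)) => [[d2 [ud2 cd2]]|Hn2].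
  have [W2 N2 Z2] := step W1 N1 Z1 Gu2 Zu2 ud2 cd2.
  have Eb : b0 + a + (b - (b0 + a)) = b by rewrite addrC subrK.
  by rewrite Eb in N2 Z2; exists (act c (b - (b0 + a)) d2 (act c a d1 h)).
exfalso.
have Hker2 : forall d, (b - (b0 + a)) d = 0 -> (b0 + a + nu) d = 0.
  move=> d ud; apply/eqP; apply/negPn/negP => bd.
  by apply: Hn2; exists d.
have [mu Hmu] := prop_of_ker Zu2 Hker2.
have P d : b0 d + nu d = lam * (b d - b0 d).
  by have := Hlam d; rewrite !lfE.
have Q d : b0 d + a d + nu d = mu * (b d - (b0 d + a d)).
  by have := Hmu d; rewrite !lfE.
case: (eqVneq mu (-1)) => Emu.
  move: Nb; rewrite -addr_eq0 => /negP; apply; apply/eqP; apply: eq0P => d.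
  rewrite add_lfunE; apply: (lin1 (Q d)); rewrite Emu; ring.
have R d : (1 + mu) * a d = (mu - lam) * (b d - b0 d).
  apply: (lin2 (Q d) (P d)); ring.
have Nbd : b d1 - b0 d1 != 0.
  by apply: contra p1 => /eqP e; rewrite add_lfunE P e mulr0.
have Eml : mu - lam = 0.
  have := R d1; rewrite ad1 mulr0 => /esym /eqP; rewrite mulf_eq0 (negbTE Nbd) orbF.
  by move/eqP.
have N1m : 1 + mu != 0 by rewrite addrC addr_eq0.
move/negP: Za; apply; apply/eqP; apply: eq0P => d.
have := R d; rewrite Eml mul0r => /eqP; rewrite mulf_eq0 (negbTE N1m) /=.
by move/eqP.
Qed.

Lemma CORE f b0 : W f -> f b0 != 0 -> b0 != - nu ->
  forall b, b \in G -> b != - nu ->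
  exists h, [/\ W h, h b = 1 & forall g, g != - nu -> g != b -> h g = 0].
Proof.
move=> Wf fb Nb b Gb Nbn.
have Gb0 : b0 \in G.
  by apply/negPn/negP => Hn; move: fb; rewrite (WG Wf Hn) eqxx.
have [s Hs] := Wfin Wf.
have [h1 [W1 N1 Z1]] := @reduce b0 s f Wf fb Nb (fun g _ _ H => Hs g H).
have [h2 [W2 N2 Z2]] := reach W1 N1 Z1 Gb0 Nb Gb Nbn.
exists (fun g => (h2 b)^-1 * h2 g); split.
- by apply: Wscale.
- by rewrite mulVf.
- by move=> g g1 g2 /=; rewrite (Z2 g) // mulr0.
Qed.

End Core.

Definition delta (b : Dstar) : Dstar -> F := fun g => if g == b then 1 else 0.

Lemma funextF (f h : Dstar -> F) : (forall g, f g = h g) -> f = h.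
Proof. by move=> H; apply: functional_extensionality. Qed.

Lemma Vmod_zero : Vmod G (fun _ => 0).
Proof. by split=> //; exists [::] => g; rewrite eqxx. Qed.

Lemma Vmod_add f h : Vmod G f -> Vmod G h -> Vmod G (fun g => f g + h g).
Proof.
move=> [Hf [s1 Hs1]] [Hh [s2 Hs2]]; split.
  by move=> g Hg; rewrite Hf // Hh // addr0.
exists (s1 ++ s2) => g Hg; rewrite mem_cat.
case: (eqVneq (f g) 0) => E1; last by rewrite Hs1.
case: (eqVneq (h g) 0) => E2; last by rewrite Hs2 ?orbT.
by move: Hg; rewrite E1 E2 addr0 eqxx.
Qed.

Lemma Vmod_scale (k : F) f : Vmod G f -> Vmod G (fun g => k * f g).
Proof.
move=> [Hf [s Hs]]; split; first by move=> g Hg; rewrite Hf // mulr0.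
exists s => g Hg; apply: Hs; apply: contra Hg => /eqP ->; by rewrite mulr0.
Qed.

Lemma notG_sub g a : a \in G -> g \notin G -> g - a \notin G.
Proof.
move=> Ga; apply: contra => H; rewrite -(subrK a g); exact: GD.
Qed.

Lemma Vmod_act c a d f : a \in G -> Vmod G f -> Vmod G (act c a d f).
Proof.
move=> Ga [Hf [s Hs]]; split.
  by move=> g Hg; rewrite /act Hf ?mulr0 // notG_sub.
exists (map (fun x => x + a) s) => g Hg; apply/mapP; exists (g - a); last by rewrite subrK.
apply: Hs; apply: contra Hg => /eqP E; by rewrite /act E mulr0.
Qed.

Lemma Vmod_sub c : submodule G c (Vmod G).
Proof.
split=> //; [exact: Vmod_zero | exact: Vmod_add | exact: Vmod_scale |].
by move=> a d f Ga _ _; apply: Vmod_act.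
Qed.

Lemma Vmod_delta b : b \in G -> Vmod G (delta b).
Proof.
move=> Gb; split.
  move=> g Hg; rewrite /delta; case: (eqVneq g b) => // E; by move: Hg; rewrite E Gb.
exists [:: b] => g; rewrite /delta; case: (eqVneq g b) => [->|]; by rewrite ?inE ?eqxx.
Qed.

Lemma delta_nz b : ~ zerof (delta b).
Proof. by move=> H; have := H b; rewrite /delta eqxx => /eqP; rewrite oner_eq0. Qed.

Lemma span (P : pred Dstar) (W : (Dstar -> F) -> Prop) :
  W (fun _ => 0) -> (forall f h, W f -> W h -> W (fun g => f g + h g)) ->
  (forall (k : F) f, W f -> W (fun g => k * f g)) ->
  (forall b, b \in P -> W (delta b)) -> forall f, Vmod P f -> W f.
Proof.
move=> W0 Wa Ws Wd f [HP [s Hs]].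
elim: s f HP Hs => [|x s IH] f HP Hs.
  have -> : f = (fun _ => 0); last done.
  apply: funextF => g; case: (eqVneq (f g) 0) => // E; by have := Hs g E.
case: (boolP (x \in P)) => Px; last first.
  apply: IH => // g Hg; have := Hs g Hg; rewrite in_cons => /orP [/eqP E|//].
  by move: Hg; rewrite E HP // eqxx.
set f' := fun g => f g + (- f x) * delta x g.
have Wf' : W f'.
  apply: IH.
    move=> g Hg; rewrite /f' /delta; case: (eqVneq g x) => [E|_].
      by move: Hg; rewrite E Px.
    by rewrite HP // mulr0 addr0.
  move=> g; rewrite /f' /delta; case: (eqVneq g x) => [->|Ne].
    by rewrite mulr1 subrr eqxx.
  rewrite mulr0 addr0 => Hg; have := Hs g Hg; rewrite in_cons (negbTE Ne) //.
have -> : f = (fun g => f' g + f x * delta x g).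
  apply: funextF => g; rewrite /f'; ring.
by apply: Wa => //; apply: Ws; apply: Wd.
Qed.

Lemma act_delta c a d b g :
  act c a d (delta b) g = if g == b + a then c a d b else 0.
Proof.
rewrite /act /delta -subr_eq; case: (eqVneq (g - a) b) => [->|_]; by rewrite ?mulr1 ?mulr0.
Qed.

Lemma exists_ne (x : Dstar) : exists b, b \in G /\ b != x.
Proof.
case: (eqVneq x 0) => [->|Nx]; last by exists 0; rewrite eq_sym Nx.
have [a1 [G1 Z1]] := exists_a1; by exists a1; split.
Qed.

Definition HcP c nu := forall a d b, a \in G -> a != 0 -> a d = 0 -> b != - nu -> a + b != - nu ->
  c a d b = (b + nu) d.

Lemma CORE_sub c nu U : submodule G c U -> HcP c nu ->
  (forall f a d, U f -> a \in G -> a != 0 -> a d = 0 -> c a d (- nu) * f (- nu) = 0) ->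
  forall f b0, U f -> f b0 != 0 -> b0 != - nu -> forall b, b \in G -> b != - nu ->
  exists h, [/\ U h, h b = 1 & forall g, g != - nu -> g != b -> h g = 0].
Proof.
move=> [HV W0 Wa Ws Wact] HC H2' f b0 Uf fb Nb.
apply: (CORE Wa Ws Wact _ _ HC H2' Uf fb Nb).
- by move=> f' g Uf' Hg; apply: (HV f' Uf').1.
- by move=> f' Uf'; apply: (HV f' Uf').2.
Qed.

Lemma avoid_irr c nu : HcP c nu ->
  (forall a d, a \in G -> a != 0 -> a d = 0 -> c a d (- nu - a) = 0) ->
  irreducible_sub G c (avoid G (- nu)).
Proof.
move=> HC Hc0.
have Sub : submodule G c (avoid G (- nu)).
  split.
  - by move=> f [].
  - by split; [exact: Vmod_zero | done].
  - by move=> f h [Vf f0] [Vh h0]; split; [exact: Vmod_add | rewrite f0 h0 addr0].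
  - by move=> k f [Vf f0]; split; [exact: Vmod_scale | rewrite f0 mulr0].
  - move=> a d f Ga Za ad [Vf f0]; split; first exact: Vmod_act.
    by rewrite /act Hc0 // mul0r.
split=> //.
  have [b [Gb Nb]] := exists_ne (- nu).
  exists (delta b); split; last exact: delta_nz.
  by split; [exact: Vmod_delta | rewrite /delta eq_sym (negbTE Nb)].
move=> U SU HU.
case: (classic (forall f, U f -> zerof f)) => [H|H]; [by left | right].
have [f Hf] := not_all_ex_not _ _ H.
have [Uf nzf] := imply_to_and _ _ Hf.
have [g0 Hg0] := not_all_ex_not _ _ nzf; move/eqP: Hg0 => Hg0.
have Ng0 : g0 != - nu.
  by apply/negP => /eqP E; move: Hg0; rewrite E (HU f Uf).2 eqxx.
have H2' : forall f a d, U f -> a \in G -> a != 0 -> a d = 0 -> c a d (- nu) * f (- nu) = 0.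
  by move=> f' a d Uf' _ _ _; rewrite (HU f' Uf').2 mulr0.
have HH := CORE_sub SU HC H2' Uf Hg0 Ng0.
have [_ W0 Wa Ws _] := SU.
move=> f' Af'.
apply: (span (P := [pred g | (g \in G) && (g != - nu)])) => //.
  move=> b /andP [Gb Nb]; have [h [Uh hb hz]] := HH b Gb Nb.
  have -> : delta b = h; last done.
  apply: funextF => g; rewrite /delta; case: (eqVneq g b) => [->|Ngb]; first by rewrite hb.
  case: (eqVneq g (- nu)) => [->|Ngn]; first by rewrite (HU h Uh).2.
  by rewrite hz.
have [[Vf1 [s Hs]] f0] := Af'.
split; last by exists s.
move=> g; rewrite inE negb_and negbK => /orP [Hg|/eqP ->]; last done.
exact: Vf1.
Qed.

Section Line.
Variables (c : Dstar -> D -> Dstar -> F) (nu : Dstar).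
Hypothesis Gnu : - nu \in G.
Hypothesis Hl : forall a d, a \in G -> a != 0 -> a d = 0 -> c a d (- nu) = 0.

Lemma line_act a d f : a \in G -> a != 0 -> a d = 0 -> line (- nu) f -> zerof (act c a d f).
Proof.
move=> Ga Za ad [k Hk] g; rewrite /act Hk.
by case: eqP => [->|_]; [rewrite Hl // mul0r | rewrite mulr0].
Qed.

Lemma line_Vmod f : line (- nu) f -> Vmod G f.
Proof.
move=> [k Hk]; split.
  move=> g Hg; rewrite Hk; case: (eqVneq g (- nu)) => [E|//]; by move: Hg; rewrite E Gnu.
exists [:: - nu] => g; rewrite Hk; case: (eqVneq g (- nu)) => [->|]; by rewrite ?inE ?eqxx.
Qed.

Lemma line_sub : submodule G c (line (- nu)).
Proof.
split.
- exact: line_Vmod.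
- by exists 0 => g; case: ifP.
- move=> f h [k1 H1] [k2 H2']; exists (k1 + k2) => g; rewrite H1 H2'.
  by case: ifP; rewrite ?addr0.
- move=> k f [k1 H1]; exists (k * k1) => g; rewrite H1.
  by case: ifP; rewrite ?mulr0.
- move=> a d f Ga Za ad Hf; exists 0 => g; rewrite (line_act Ga Za ad Hf).
  by case: ifP.
Qed.

Lemma line_irr : irreducible_sub G c (line (- nu)).
Proof.
split; first exact: line_sub.
  exists (delta (- nu)); split; last exact: delta_nz.
  by exists 1.
move=> U SU HU.
case: (classic (forall f, U f -> zerof f)) => [H|H]; [by left | right].
have [f Hf] := not_all_ex_not _ _ H.
have [Uf nzf] := imply_to_and _ _ Hf.
have [g0 Hg0] := not_all_ex_not _ _ nzf; move/eqP: Hg0 => Hg0.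
have [k Hk] := HU f Uf.
have Nk : k != 0.
  by apply: contra Hg0; move/eqP => Ek; rewrite Hk Ek; case: ifP.
move=> h [k' Hk'].
have -> : h = (fun g => (k' / k) * f g).
  apply: funextF => g; rewrite Hk Hk'; case: ifP; rewrite ?mulr0 //.
  by move=> _; rewrite mulfVK.
by have [_ _ _ Ws _] := SU; apply: Ws.
Qed.

End Line.

Lemma eqB (a b z : Dstar) : (b == - a - z) = (a + b == - z).
Proof. by apply/eqP/eqP => E; [rewrite E addNKr | rewrite -E addKr]. Qed.

Lemma eqS (a x : Dstar) : (a + x == x) = (a == 0).
Proof. by rewrite -{2}[x]add0r (inj_eq (addIr x)). Qed.

Lemma sub_cap c (W1 W2 : (Dstar -> F) -> Prop) : submodule G c W1 -> submodule G c W2 ->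
  submodule G c (fun f => W1 f /\ W2 f).
Proof.
move=> [V1 Z1 A1 S1 T1] [V2 Z2 A2 S2 T2]; split.
- by move=> f [H _]; apply: V1.
- by split.
- by move=> f h [? ?] [? ?]; split; [apply: A1 | apply: A2].
- by move=> k f [? ?]; split; [apply: S1 | apply: S2].
- by move=> a d f Ga Za ad [? ?]; split; [apply: T1 | apply: T2].
Qed.

Section AB.
Variables (zeta eta : Dstar).
Hypothesis Gz : zeta \in G.

Lemma Gnz : - zeta \in G. Proof. exact: GN. Qed.

Lemma cA_Hc : HcP (cA zeta eta) zeta.
Proof. by move=> a d b _ _ _ Nb _; rewrite /cA (negbTE Nb). Qed.

Lemma cA_Hc0 a d : a \in G -> a != 0 -> a d = 0 -> cA zeta eta a d (- zeta - a) = 0.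
Proof.
move=> Ga Za ad; rewrite /cA addrC eqS oppr_eq0 (negbTE Za) !lfE ad; ring.
Qed.

Lemma cB_Hc : HcP (cB zeta eta) zeta.
Proof. by move=> a d b _ _ _ _ Nab; rewrite /cB eqB (negbTE Nab). Qed.

Lemma cB_Hl a d : a \in G -> a != 0 -> a d = 0 -> cB zeta eta a d (- zeta) = 0.
Proof.
move=> Ga Za ad; rewrite /cB eqB eqS (negbTE Za) addNr zero_lfunE //.
Qed.

Lemma A_avoid_irr : irreducible_sub G (cA zeta eta) (avoid G (- zeta)).
Proof. exact: (avoid_irr cA_Hc cA_Hc0). Qed.

Lemma B_quot : quotient_irreducible G (cB zeta eta) (line (- zeta)).
Proof.
split; first exact: (line_sub Gnz cB_Hl).
  have [b [Gb Nb]] := exists_ne (- zeta).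
  exists (delta b); split; first exact: Vmod_delta.
  move=> [k Hk]; have := Hk b; rewrite /delta eqxx (negbTE Nb) => /eqP.
  by rewrite oner_eq0.
move=> W SW HLW.
case: (classic (forall f, W f -> line (- zeta) f)) => [H|H]; [by left | right].
have [f Hf] := not_all_ex_not _ _ H; have [Wf nLf] := imply_to_and _ _ Hf.
have [g0 [Ng0 Hg0]] : exists g0, g0 != - zeta /\ f g0 != 0.
  apply: NNPP => Hn; apply: nLf; exists (f (- zeta)) => g.
  case: (eqVneq g (- zeta)) => [->|Ng]; first done.
  by apply/eqP; apply/negPn/negP => Hfg; apply: Hn; exists g.
have H2' : forall f a d, W f -> a \in G -> a != 0 -> a d = 0 ->
    cB zeta eta a d (- zeta) * f (- zeta) = 0.
  by move=> f' a d _ Ga Za ad; rewrite cB_Hl // mul0r.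
have HH := CORE_sub SW cB_Hc H2' Wf Hg0 Ng0.
have [_ W0 Wa Ws _] := SW.
have Wdz : W (delta (- zeta)) by apply: HLW; exists 1.
apply: span => // b Gb.
case: (eqVneq b (- zeta)) => [->//|Nb].
have [h [Wh hb hz]] := HH b Gb Nb.
have -> : delta b = (fun g => h g + (- h (- zeta)) * delta (- zeta) g).
  apply: funextF => g; rewrite /delta.
  case: (eqVneq g b) => [->|Ngb]; first by rewrite hb (negbTE Nb) mulr0 addr0.
  case: (eqVneq g (- zeta)) => [->|Ngz]; first by rewrite mulr1 subrr.
  by rewrite hz // mulr0 addr0.
by apply: Wa => //; apply: Ws.
Qed.

Lemma not_irr_A : ~ irreducible_mod G (cA zeta eta).
Proof.
move=> [_ _ H].
have [b [Gb Nb]] := exists_ne (- zeta).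
have [Sa _ _] := A_avoid_irr.
case: (H _ Sa (fun f Hf => Hf.1)) => [H0|H1].
  apply: (@delta_nz b); apply: H0; split; first exact: Vmod_delta.
  by rewrite /delta eq_sym (negbTE Nb).
have [_] := H1 _ (Vmod_delta Gnz); rewrite /delta eqxx => /eqP; by rewrite oner_eq0.
Qed.

Lemma not_irr_B : ~ irreducible_mod G (cB zeta eta).
Proof.
move=> [_ _ H].
have [b [Gb Nb]] := exists_ne (- zeta).
case: (H _ (line_sub Gnz cB_Hl) (line_Vmod Gnz)) => [H0|H1].
  by apply: (@delta_nz (- zeta)); apply: H0; exists 1.
have [k Hk] := H1 _ (Vmod_delta Gb); have := Hk b.
by rewrite /delta eqxx (negbTE Nb) => /eqP; rewrite oner_eq0.
Qed.

Hypothesis Heta : eta != 0.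

Lemma indec_A : indecomposable G (cA zeta eta).
Proof.
split; first by exists (delta 0); split; [exact: Vmod_delta | exact: delta_nz].
move=> [W1 [W2 [S1 [S2 [N1 [N2 [DS1 DS2]]]]]]].
have [Sa _ Ia] := A_avoid_irr.
have key : forall W, submodule G (cA zeta eta) W -> (exists f, W f /\ ~ zerof f) ->
    forall f, avoid G (- zeta) f -> W f.
  move=> W SW [f [Wf nzf]].
  have [HV _ _ _ Wact] := SW.
  have [w [Ww [Aw nzw]]] : exists w, W w /\ avoid G (- zeta) w /\ ~ zerof w.
    case: (eqVneq (f (- zeta)) 0) => fz.
      by exists f; split=> //; split=> //; split=> //; apply: HV.
    have [a [Ga Za [d [ad pd _]]]] := GEO Heta Heta.
    exists (act (cA zeta eta) a d f); split; first by apply: Wact.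
    split.
      split; first by apply: Vmod_act => //; apply: HV.
      by rewrite /act cA_Hc0 // mul0r.
    move=> Hz; have := Hz (a - zeta); rewrite /act.
    have -> : a - zeta - a = - zeta by rewrite addrAC subrr add0r.
    rewrite /cA eqxx => /eqP; rewrite mulf_eq0 (negbTE pd) (negbTE fz) //.
  have SI := sub_cap SW Sa.
  case: (Ia _ SI (fun f H => H.2)) => [H0|Hall].
    by exfalso; apply: nzw; apply: H0.
  by move=> f' Af'; exact: (Hall f' Af').1.
have [b [Gb Nb]] := exists_ne (- zeta).
have Ab : avoid G (- zeta) (delta b).
  split; first exact: Vmod_delta.
  by rewrite /delta eq_sym (negbTE Nb).
by apply: (@delta_nz b); apply: DS1; apply: key.
Qed.

Lemma ds_swap (W1 W2 : (Dstar -> F) -> Prop) : direct_sum G W1 W2 -> direct_sum G W2 W1.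
Proof.
move=> [D1 D2]; split; first by move=> f H1 H2; apply: D1.
move=> f Vf; have [f1 [f2 [H1 H2 E]]] := D2 f Vf; exists f2, f1; split=> // g.
by rewrite E addrC.
Qed.

Lemma lineW c W w : submodule G c W -> W w -> line (- zeta) w -> ~ zerof w ->
  forall f, line (- zeta) f -> W f.
Proof.
move=> [_ _ _ Ws _] Ww [k Hk] nzw f [k' Hk'].
have Nk : k != 0.
  apply/negP => /eqP Ek; apply: nzw => g; rewrite Hk Ek; by case: ifP.
have -> : f = (fun g => (k' / k) * w g).
  apply: funextF => g; rewrite Hk Hk'; case: ifP; rewrite ?mulr0 //.
  by move=> _; rewrite mulfVK.
by apply: Ws.
Qed.

Lemma noLsub (W1 W2 : (Dstar -> F) -> Prop) :
  submodule G (cB zeta eta) W1 -> submodule G (cB zeta eta) W2 -> direct_sum G W1 W2 ->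
  (exists f, W2 f /\ ~ zerof f) -> ~ (forall f, line (- zeta) f -> W1 f).
Proof.
move=> S1 S2 [D1 D2] [f2 [W2f2 nz2]] HL.
have [_ _ Q] := B_quot.
case: (Q W1 S1 HL) => [H1L|HV1]; last first.
  have [HV2 _ _ _ _] := S2.
  by apply: nz2; apply: D1 => //; apply: HV1; apply: HV2.
have [a [Ga Za [d [ad pd _]]]] := GEO Heta Heta.
have Gb : - a - zeta \in G by apply: GB => //; apply: GN.
have [f1 [f2' [W1f1 W2f2' E]]] := D2 _ (Vmod_delta Gb).
have [_ _ _ _ Wact2] := S2.
have Ww := Wact2 _ _ _ Ga Za ad W2f2'.
have Lf1 := H1L f1 W1f1.
have wE : forall g, act (cB zeta eta) a d f2' g = if g == - zeta then eta d else 0.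
  move=> g.
  have e1 := line_act (@cB_Hl) Ga Za ad Lf1 g; rewrite /act in e1.
  have e2 : act (cB zeta eta) a d f2' g = act (cB zeta eta) a d (delta (- a - zeta)) g.
    rewrite /act; have := E (g - a) => ->.
    by rewrite mulrDr e1 add0r.
  rewrite e2 act_delta.
  have -> : - a - zeta + a = - zeta by rewrite addrAC addNr add0r.
  by rewrite /cB eqxx.
have Lw : line (- zeta) (act (cB zeta eta) a d f2') by exists (eta d).
have := D1 _ (HL _ Lw) Ww (- zeta); rewrite wE eqxx => /eqP.
by rewrite (negbTE pd).
Qed.

Lemma indec_B : indecomposable G (cB zeta eta).
Proof.
split; first by exists (delta 0); split; [exact: Vmod_delta | exact: delta_nz].
move=> [W1 [W2 [S1 [S2 [N1 [N2 DS]]]]]].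
have nL1 := noLsub S1 S2 DS N2.
have nL2 := noLsub S2 S1 (ds_swap DS) N1.
have [_ _ Q] := B_quot.
have [HV1 W01 Wa1 Ws1 Wact1] := S1.
have dz0 : forall a d g, a \in G -> a != 0 -> a d = 0 ->
    act (cB zeta eta) a d (delta (- zeta)) g = 0.
  move=> a d g Ga Za ad; apply: (line_act (@cB_Hl) Ga Za ad); by exists 1.
set WL := fun f => exists f1 (k : F), W1 f1 /\ forall g, f g = f1 g + k * delta (- zeta) g.
have SL : submodule G (cB zeta eta) WL.
  split.
  - move=> f [f1 [k [Wf1 E]]].
    have -> : f = (fun g => f1 g + k * delta (- zeta) g) by apply: funextF.
    apply: Vmod_add; first exact: HV1.
    by apply: Vmod_scale; apply: Vmod_delta; apply: Gnz.
  - exists (fun _ => 0), 0; split=> // g; by rewrite mul0r addr0.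
  - move=> f h [f1 [k1 [W1f E1]]] [h1 [k2 [W1h E2]]].
    exists (fun g => f1 g + h1 g), (k1 + k2); split; first by apply: Wa1.
    move=> g; rewrite E1 E2; ring.
  - move=> k f [f1 [k1 [W1f E1]]]; exists (fun g => k * f1 g), (k * k1); split.
      by apply: Ws1.
    move=> g; rewrite E1; ring.
  - move=> a d f Ga Za ad [f1 [k1 [W1f E1]]].
    exists (act (cB zeta eta) a d f1), 0; split; first by apply: Wact1.
    move=> g; rewrite mul0r addr0.
    have e := dz0 a d g Ga Za ad; rewrite /act in e.
    by rewrite /act E1 mulrDr mulrCA e mulr0 addr0.
have HLW : forall f, line (- zeta) f -> WL f.
  move=> f [k Hk]; exists (fun _ => 0), k; split=> // g.
  by rewrite Hk /delta add0r; case: ifP; rewrite ?mulr1 ?mulr0.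
case: (Q WL SL HLW) => [HsubL|HVall].
  apply: nL1.
  have [w [Ww nzw]] := N1.
  have Lw : line (- zeta) w.
    apply: HsubL; exists w, 0; split=> // g; by rewrite mul0r addr0.
  exact: (lineW S1 Ww Lw nzw).
have [w [Ww nzw]] := N2.
have [HV2 _ _ _ Wact2] := S2.
have inv : forall a d, a \in G -> a != 0 -> a d = 0 -> zerof (act (cB zeta eta) a d w).
  move=> a d Ga Za ad.
  have [u1 [k [Wu1 Eu]]] := HVall w (HV2 w Ww).
  have Ea : act (cB zeta eta) a d w = act (cB zeta eta) a d u1.
    apply: funextF => g.
    have e := dz0 a d g Ga Za ad; rewrite /act in e.
    by rewrite /act Eu mulrDr mulrCA e mulr0 addr0.
  apply: (DS.1); last by apply: Wact2.
  by rewrite Ea; apply: Wact1.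
have [g0 [Ng0 Hg0]] : exists g0, g0 != - zeta /\ w g0 != 0.
  apply: NNPP => Hn.
  have Lw : line (- zeta) w.
    exists (w (- zeta)) => g.
    case: (eqVneq g (- zeta)) => [->|Ng]; first done.
    by apply/eqP; apply/negPn/negP => Hfg; apply: Hn; exists g.
  by apply: nL2; apply: (lineW S2 Ww Lw nzw).
have Nz : g0 + zeta != 0 by rewrite addr_eq0.
have [a [Ga Za [d [ad pd _]]]] := GEO Nz Nz.
have := inv a d Ga Za ad (g0 + a); rewrite /act addrK /cB.
case: (eqVneq g0 (- a - zeta)) => [E|_].
  exfalso; move/eqP: E; rewrite eqB => /eqP E.
  by move: pd; rewrite addrC in E; rewrite (zero_of E ad) eqxx.
by move/eqP; rewrite mulf_eq0 (negbTE pd) (negbTE Hg0).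
Qed.

End AB.

Lemma iso_shift (zeta : Dstar) c : zeta \in G ->
  (forall a d b, a \in G -> a != 0 -> a d = 0 -> c a d b = (b + zeta) d) ->
  mod_iso G c (cM 0).
Proof.
move=> Gz Hcz.
exists (fun f g => f (g - zeta)); split.
  move=> f [Hf [s Hs]]; split.
    by move=> g Hg; rewrite Hf // notG_sub.
  exists (map (fun x => x + zeta) s) => g Hg; apply/mapP; exists (g - zeta).
    exact: Hs.
  by rewrite subrK.
split.
- by move=> f h _ _ E g; apply: E.
- by [].
- by move=> f h _ _ E g; have := E (g + zeta); rewrite /= addrK.
- move=> h [Hh [s Hs]]; exists (fun g => h (g + zeta)); last by move=> g /=; rewrite subrK.
  split.
    move=> g Hg; apply: Hh; apply: contra Hg => H; rewrite -(addrK zeta g).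
    exact: GB.
  exists (map (fun x => x - zeta) s) => g Hg; apply/mapP; exists (g + zeta).
    exact: Hs.
  by rewrite addrK.
- move=> a d f Ga Za ad Vf g; rewrite /act /cM /= Hcz //.
  rewrite [g - zeta - a]addrAC subrK addr0 //.
Qed.

Lemma iso_A zeta : zeta \in G -> mod_iso G (cA zeta 0) (cM 0).
Proof.
move=> Gz; apply: (@iso_shift zeta (cA zeta 0) Gz) => a d b Ga Za ad; rewrite /cA.
case: (eqVneq b (- zeta)) => [->|//]; by rewrite addNr !zero_lfunE.
Qed.

Lemma iso_B zeta : zeta \in G -> mod_iso G (cB zeta 0) (cM 0).
Proof.
move=> Gz; apply: (@iso_shift zeta (cB zeta 0) Gz) => a d b Ga Za ad; rewrite /cB.
case: (eqVneq b (- a - zeta)) => [->|//].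
by rewrite subrK zero_lfunE opp_lfunE ad oppr0.
Qed.

Lemma ds_mu (mu : Dstar) : direct_sum G (avoid G (- mu)) (line (- mu)).
Proof.
split.
  move=> f [Vf f0] [k Hk] g; have := Hk (- mu); rewrite eqxx f0 => k0.
  by rewrite Hk -k0; case: ifP.
move=> f [Hf [s Hs]].
exists (fun g => if g == - mu then 0 else f g), (fun g => if g == - mu then f (- mu) else 0).
split.
- split; last by rewrite eqxx.
  split; first by move=> g Hg; case: ifP => // _; apply: Hf.
  exists s => g; case: ifP => _; [by rewrite eqxx | exact: Hs].
- by exists (f (- mu)).
- by move=> g; case: (eqVneq g (- mu)) => [->|_]; rewrite ?add0r ?addr0.
Qed.

Lemma irr_M_notin (mu : Dstar) : mu \notin G -> irreducible_mod G (cM mu).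
Proof.
move=> Nmu.
have Nmu' : - mu \notin G.
  by apply: contra Nmu => H; rewrite -[mu]opprK; apply: GN.
split; first exact: Vmod_sub.
  by exists (delta 0); split; [exact: Vmod_delta | exact: delta_nz].
move=> U SU HU.
case: (classic (forall f, U f -> zerof f)) => [H|H]; [by left | right].
have [f Hf] := not_all_ex_not _ _ H.
have [Uf nzf] := imply_to_and _ _ Hf.
have [g0 Hg0] := not_all_ex_not _ _ nzf; move/eqP: Hg0 => Hg0.
have Ng0 : g0 != - mu.
  apply/negP => /eqP E; move: Hg0; rewrite E ((HU f Uf).1 _ Nmu') eqxx //.
have H2' : forall f a d, U f -> a \in G -> a != 0 -> a d = 0 -> cM mu a d (- mu) * f (- mu) = 0.
  by move=> f' a d _ _ _ _; rewrite /cM addNr zero_lfunE mul0r.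
have HH := CORE_sub SU (fun _ _ _ _ _ _ _ _ => erefl) H2' Uf Hg0 Ng0.
have [_ W0 Wa Ws _] := SU.
apply: span => // b Gb.
have Nb : b != - mu by apply: contra Nmu' => /eqP <-.
have [h [Uh hb hz]] := HH b Gb Nb.
have -> : delta b = h; last done.
apply: funextF => g; rewrite /delta; case: (eqVneq g b) => [->|Ngb]; first by rewrite hb.
case: (eqVneq g (- mu)) => [->|Ngn]; first by rewrite ((HU h Uh).1 _ Nmu').
by rewrite hz.
Qed.

Lemma irr_M_in (mu : Dstar) : mu \in G ->
  [/\ direct_sum G (avoid G (- mu)) (line (- mu)),
      irreducible_sub G (cM mu) (avoid G (- mu)) &
      irreducible_sub G (cM mu) (line (- mu))].
Proof.
move=> Gmu; split.
- exact: ds_mu.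
- apply: avoid_irr => //.
  by move=> a d Ga Za ad; rewrite /cM !lfE ad; ring.
- apply: line_irr; first exact: GN.
  by move=> a d _ _ _; rewrite /cM addNr zero_lfunE.
Qed.

End Geo.

Theorem lemma2p1 (F : closedFieldType) (D : vectType F)
    (G : pred 'Hom(D, F^o)) (mu eta zeta : 'Hom(D, F^o)) :
  [pchar F] =i pred0 ->
  (2 <= \dim (fullv : {vspace D}))%N ->
  0 \in G ->
  (forall a b, a \in G -> b \in G -> a - b \in G) ->
  (forall d : D, (forall a, a \in G -> a d = 0) -> d = 0) ->
  zeta \in G ->
  [/\ (mu \notin G -> irreducible_mod G (cM mu)),
      (mu \in G ->
         [/\ direct_sum G (avoid G (- mu)) (line (- mu)),
             irreducible_sub G (cM mu) (avoid G (- mu)) &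
             irreducible_sub G (cM mu) (line (- mu))]),
      (eta != 0 ->
         [/\ indecomposable G (cA zeta eta), ~ irreducible_mod G (cA zeta eta),
             indecomposable G (cB zeta eta) & ~ irreducible_mod G (cB zeta eta)] /\
         [/\ irreducible_sub G (cA zeta eta) (avoid G (- zeta)),
             submodule G (cB zeta eta) (line (- zeta)),
             (forall a d f, a \in G -> a != 0 -> a d = 0 ->
                line (- zeta) f -> zerof (act (cB zeta eta) a d f)) &
             quotient_irreducible G (cB zeta eta) (line (- zeta))]) &
      (eta = 0 -> mod_iso G (cA zeta 0) (cM 0) /\ mod_iso G (cB zeta 0) (cM 0))].
Proof.
move=> Hch Hd G0 GB Gs Gz; split.
- exact: (irr_M_notin G0 GB Gs Hd Hch).
- exact: (irr_M_in G0 GB Gs Hd Hch).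
- move=> Heta; split; split.
  + exact: (indec_A G0 GB Gs Hd Hch zeta Heta).
  + exact: (not_irr_A G0 GB Gs Hd Hch Gz).
  + by apply: (indec_B G0 GB Gs Hd Hch).
  + exact: (not_irr_B G0 GB Gs Hd Gz).
  + exact: (A_avoid_irr G0 GB Gs Hd Hch zeta eta).
  + exact: (line_sub (GN G0 GB Gz) (cB_Hl zeta eta)).
  + move=> a d f Ga Za ad Hf; exact: (line_act (cB_Hl zeta eta) Ga Za ad Hf).
  + exact: (B_quot G0 GB Gs Hd Hch eta Gz).
- move=> _; split; [exact: (iso_A G0 GB) | exact: (iso_B G0 GB)].
Qed.
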